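(* Let $\mathcal{T}$ be a single-elimination tournament, $u\in V(\mathcal{T})$, $\mathcal{B}_u$ a non-empty set of brackets of $\mathcal{T}_u$, and $\mathcal{A}$ a partition of $P(\mathcal{T})\setminus P(u)$ such that for every $a\in P(\mathcal{T})\setminus P(u)$, the part $A\in\mathcal{A}$ with $a\in A$ contains some $b\in A\setminus\{a\}$ with $b\in P(x)$ for every match $x$ with $a\in P(x)$. Then there exists a set of brackets $\mathcal{B}$ of $\mathcal{T}$ with \[|\mathcal{B}|=|P(\mathcal{T})\setminus P(u)|+\max\{0,|\mathcal{B}_u|-|\mathcal{A}|\}\] such that, for every scoring system $\sigma$ of $\mathcal{T}$, $\mathcal{B}$ is $\sigma$-resolving whenever $\mathcal{B}_u$ is $\sigma_u$-resolving.
   Context: A single-elimination tournament is a finite directed graph $\mathcal{T}$ such that: (a) $\mathcal{T}$ has exactly one sink (vertex with no out-neighbours); (b) every non-sink vertex has exactly one out-neighbour; (c) $\mathcal{T}$ has no directed cycles; (d) $|N^-(v)|\ne 1$ for every vertex $v$, where $N^-(v)$ denotes the set of in-neighbours of $v$. The players $P(\mathcal{T})$ are the sources and the matches are $M(\mathcal{T})=V(\mathcal{T})\setminus P(\mathcal{T})$. For a vertex $u$, $P(u)$ is the set of players $a$ for which there is a directed walk from $a$ to $u$ (length $0$ allowed). For $u\in V(\mathcal{T})$, $\mathcal{T}_u$ is the digraph obtained from $\mathcal{T}$ by deleting every vertex $v$ with $P(v)\not\subseteq P(u)$ (it is a single-elimination tournament), and $\sigma_u$ is the restriction of $\sigma$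 to $M(\mathcal{T})\cap V(\mathcal{T}_u)=M(\mathcal{T}_u)$. A bracket is a function $B:V(\mathcal{T})\to P(\mathcal{T})$ with $B(a)=a$ for every player $a$ and $B(x)\in\{B(u):u\in N^-(x)\}$ for every match $x$. A scoring system is any function $\sigma:M(\mathcal{T})\to\mathbb{R}_{>0}$. For brackets $B,B'$ let $\mathrm{score}_\sigma(B,B')=\sum_{x\in M(\mathcal{T}):\,B(x)=B'(x)}\sigma(x)$. A set of brackets $\mathcal{B}$ is $\sigma$-resolving if for every pair of distinct brackets $B\ne B'$ there is $B_i\in\mathcal{B}$ with $\mathrm{score}_\sigma(B_i,B)\ne\mathrm{score}_\sigma(B_i,B')$ (and analogously for $\mathcal{T}_u,\sigma_u$). *)

(* Defs.v *)
From HB Require Import structures.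
From mathcomp Require Import all_boot all_order all_algebra.
From mathcomp Require Export reals.
Set Implicit Arguments. Unset Strict Implicit. Unset Printing Implicit Defensive.
Import Order.TTheory GRing.Theory Num.Theory.

(* A finite digraph is given by a vertex set S inside a finite ambient type V
   and the edge relation E restricted to S.  The whole tournament T is
   (setT, E); the subtournament T_u is (S_u, E) with S_u the set of vertices v
   with P(v) \subset P(u). *)
Section Digraph.
Variable V : finType.
Variable S : {set V}.
Variable E : rel V.

Definition Er : rel V := fun x y => [&& x \in S, y \in S & E x y].

Definition in_nb (v : V) : {set V} := [set y | Er y v].
Definition out_nb (v : V) : {set V} := [set y | Er v y].

Definition is_sink (v : V) : bool := (v \in S) && (#|out_nb v| == 0%N).

Definition is_SET : Prop :=
  [/\ #|[set v in S | is_sink v]| = 1%N,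
      (forall v, v \in S -> ~~ is_sink v -> #|out_nb v| = 1%N),
      (forall x y, Er x y -> ~~ connect Er y x) &
      (forall v, v \in S -> #|in_nb v| != 1%N)].

Definition players : {set V} := [set v in S | #|in_nb v| == 0%N].
Definition matches : {set V} := [set v in S | #|in_nb v| != 0%N].

Definition Pof (u : V) : {set V} := [set a in players | connect Er a u].

(* A bracket B : V(T) -> P(T), represented as a function on the ambient type;
   by convention it is the identity outside S, so that distinct brackets are
   distinct functions. *)
Definition is_bracket (B : {ffun V -> V}) : Prop :=
  [/\ (forall v, v \in S -> B v \in players),
      (forall a, a \in players -> B a = a),
      (forall x, x \in matches -> exists2 w, w \in in_nb x & B x = B w) &
      (forall v, v \notin S -> B v = v)].

Variable R : realType.

(* scoring system: sigma : M(T) -> R_{>0}; values outside the matches are irrelevant *)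
Definition score (sigma : V -> R) (B B' : {ffun V -> V}) : R :=
  (\sum_(x in matches | B x == B' x) sigma x)%R.

Definition resolving (sigma : V -> R) (Bs : {set {ffun V -> V}}) : Prop :=
  forall B B' : {ffun V -> V}, is_bracket B -> is_bracket B' -> B != B' ->
    exists2 Bi, Bi \in Bs & score sigma Bi B != score sigma Bi B'.

End Digraph.

Definition subT (V : finType) (E : rel V) (u : V) : {set V} :=
  [set v | Pof setT E v \subset Pof setT E u].

(* Main.v *)
Require Import Defs.
From mathcomp Require Import all_boot all_order all_algebra reals.
From mathcomp Require Import zify lra.
Import Order.TTheory GRing.Theory Num.Theory.
Set Implicit Arguments. Unset Strict Implicit. Unset Printing Implicit Defensive.

Section Tree.
Variable V : finType.
Variable E : rel V.
Hypothesis HT : is_SET setT E.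
Local Notation e := (Er setT E).
Local Notation P := (Pof setT E).
Local Notation pl := (players setT E).
Local Notation ms := (matches setT E).

Lemma eE x y : e x y = E x y.
Proof. by rewrite /Er !inE. Qed.

Lemma out_uniq v y y' : e v y -> e v y' -> y = y'.
Proof.
move=> h1 h2; case: HT => _ Hb _ _.
have ns : ~~ is_sink setT E v.
  rewrite /is_sink inE /= -lt0n card_gt0; apply/set0Pn; exists y; by rewrite inE.
have /eqP/cards1P [z hz] := Hb v (in_setT v) ns.
have : y \in out_nb setT E v by rewrite inE.
have : y' \in out_nb setT E v by rewrite inE.
by rewrite hz !inE => /eqP -> /eqP ->.
Qed.

Lemma acyc x y : e x y -> ~~ connect e y x.
Proof. by case: HT => _ _ Hc _; apply: Hc. Qed.

Lemma noloop x : ~~ e x x.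
Proof. by apply/negP => h; move: (acyc h); rewrite connect0. Qed.

Lemma first_step x z : connect e x z -> x != z -> exists2 x1, e x x1 & connect e x1 z.
Proof.
move=> /connectP [[|x1 p] /= hp ->]; first by rewrite eqxx.
move: hp => /andP [h1 h2] _; exists x1 => //; apply/connectP; by exists p.
Qed.

Lemma last_step p x : connect e p x -> p != x -> exists2 w, connect e p w & e w x.
Proof.
move=> /connectP [s hs ->]; elim: s p hs => [|x1 s IH] p /=; first by rewrite eqxx.
move=> /andP [h1 h2] hne.
case: (eqVneq x1 (last x1 s)) => [hx|hx].
  by exists p => //; rewrite -hx.
have [w hw1 hw2] := IH x1 h2 hx.
exists w => //; exact: connect_trans (connect1 h1) hw1.
Qed.

Lemma cmp x y z : connect e x y -> connect e x z -> connect e y z || connect e z y.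
Proof.
move=> /connectP [s hs ->]; elim: s x hs => [|x1 s IH] x /=; first by move=> _ ->.
move=> /andP [h1 h2] hz.
case: (eqVneq x z) => [<-|hne].
  apply/orP; right; apply: connect_trans (connect1 h1) _; apply/connectP; by exists s.
have [x1' h1' h2'] := first_step hz hne.
rewrite -(out_uniq h1 h1') in h2'.
exact: IH h2 h2'.
Qed.

Lemma antisym x y : connect e x y -> connect e y x -> x = y.
Proof.
move=> hxy hyx; case: (eqVneq x y) => // hne.
have [x1 h1 h2] := first_step hxy hne.
by move: (acyc h1); rewrite (connect_trans h2 hyx).
Qed.

Definition anc v := #|[set w | connect e w v]|.

Lemma anc_lt w v : connect e w v -> w != v -> anc w < anc v.
Proof.
move=> hwv hne; apply: proper_card; apply/properP; split.
  by apply/subsetP => z; rewrite !inE => hz; apply: connect_trans hz hwv.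
exists v; rewrite !inE ?connect0 //.
by apply/negP => hvw; move: hne; rewrite (antisym hwv hvw) eqxx.
Qed.

Lemma in_nbE w x : (w \in in_nb setT E x) = e w x.
Proof. by rewrite inE. Qed.

Lemma pl_noin p w : p \in pl -> ~~ e w p.
Proof.
rewrite inE => /andP [_ /eqP /cards0_eq h]; apply/negP => hw.
by have := in_nbE w p; rewrite h inE hw.
Qed.

Lemma ms_pl v : (v \in ms) = (v \notin pl).
Proof. by rewrite !inE /=. Qed.

Lemma conn_pl q p : p \in pl -> connect e q p -> q = p.
Proof.
move=> hp hq; case: (eqVneq q p) => // hne.
have [w _ hw] := last_step hq hne; by move: (pl_noin w hp); rewrite hw.
Qed.

Lemma P_sub_pl v p : p \in P v -> p \in pl.
Proof. by rewrite inE => /andP []. Qed.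

Lemma P_conn v p : p \in P v -> connect e p v.
Proof. by rewrite inE => /andP []. Qed.

Lemma P_pl p : p \in pl -> P p = [set p].
Proof.
move=> hp; apply/setP => q; rewrite in_set1.
apply/idP/eqP => [hq|->]; first exact: conn_pl hp (P_conn hq).
by rewrite inE hp connect0.
Qed.

Lemma P_trans w v : connect e w v -> P w \subset P v.
Proof.
move=> h; apply/subsetP => p; rewrite !inE => /andP [-> hp] /=.
exact: connect_trans hp h.
Qed.

Lemma P_in_nb x p : x \in ms -> p \in P x -> exists2 w, e w x & p \in P w.
Proof.
move=> hx hp; have hne : p != x.
  by apply/eqP => hpx; move: hx; rewrite ms_pl -hpx (P_sub_pl hp).
have [w hw1 hw2] := last_step (P_conn hp) hne.
exists w => //; rewrite inE hw1 andbT; exact: P_sub_pl hp.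
Qed.

Lemma P_cmp p x y : p \in P x -> p \in P y -> connect e x y || connect e y x.
Proof. by move=> /P_conn h1 /P_conn h2; apply: cmp h1 h2. Qed.

Lemma in_nb_disj0 w w' x : connect e w w' -> e w x -> e w' x -> w = w'.
Proof.
move=> hc h1 h2; case: (eqVneq w w') => // hne.
have [x1 hx1 hc1] := first_step hc hne.
rewrite -(out_uniq h1 hx1) in hc1.
by move: (acyc h2); rewrite hc1.
Qed.

Lemma in_nb_disj w w' x p : e w x -> e w' x -> p \in P w -> p \in P w' -> w = w'.
Proof.
move=> h1 h2 hp hp'; case/orP: (P_cmp hp hp') => hc.
  exact: in_nb_disj0 hc h1 h2.
by apply/esym; apply: in_nb_disj0 hc h2 h1.
Qed.

Lemma br_P B : is_bracket setT E B -> forall v, B v \in P v.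
Proof.
case=> H1 H2 H3 _ v; have [n] := ubnP (anc v); elim: n v => // n IH v ltv.
case hv: (v \in pl).
  rewrite H2 // inE hv connect0 //.
have hm : v \in ms by rewrite ms_pl hv.
have [w hw ->] := H3 v hm.
rewrite in_nbE in hw.
have hwv : anc w < anc v by apply: anc_lt (connect1 hw) _; apply/eqP => h; move: (noloop v); rewrite -{1}h hw.
have := IH w (leq_trans hwv ltv).
by apply/subsetP/P_trans/connect1.
Qed.

Lemma br_down B z y : is_bracket setT E B -> connect e z y -> B y \in P z -> B z = B y.
Proof.
move=> hB; have [H1 H2 H3 _] := hB.
have [n] := ubnP (anc y); elim: n y => // n IH y lty hzy hBy.
case: (eqVneq z y) => [->//|hne].
have [w hzw hwy] := last_step hzy hne.
have hm : y \in ms by rewrite ms_pl; apply/negP => hp; move: (pl_noin w hp); rewrite hwy.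
have [w' hw' hB'] := H3 y hm.
rewrite in_nbE in hw'.
have hBw : B y \in P w by apply: (subsetP (P_trans hzw)).
have hBw' : B y \in P w' by rewrite hB'; apply: br_P.
have ew := in_nb_disj hwy hw' hBw hBw'.
subst w'.
have hwv : anc w < anc y by apply: anc_lt (connect1 hwy) _; apply/eqP => h; move: (noloop y); rewrite -{1}h hwy.
by rewrite hB' (IH w (leq_trans hwv lty) hzw) // -hB'.
Qed.

Lemma root_ex : exists r, forall v, connect e v r.
Proof.
case: HT => Ha Hb _ _.
have /eqP/cards1P [r hr] := Ha.
exists r => v.
have [n] := ubnP (#|V| - anc v); elim: n v => // n IH v ltv.
case hs: (is_sink setT E v).
  have : v \in [set v in setT | is_sink setT E v] by rewrite !inE; move: hs; rewrite /is_sink inE => ->.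
  by rewrite hr inE => /eqP ->; apply: connect0.
have /eqP/cards1P [v1 hv1] := Hb v (in_setT v) (negbT hs).
have h1 : e v v1.
  have : v1 \in out_nb setT E v by rewrite hv1 inE.
  by rewrite inE.
have hlt : anc v < anc v1.
  by apply: anc_lt (connect1 h1) _; apply/eqP => h; move: (noloop v); rewrite {2}h h1.
have hle : anc v1 <= #|V| by apply: max_card.
apply: connect_trans (connect1 h1) (IH v1 _).
move: hlt hle ltv; clear; lia.
Qed.


Variable u : V.
Local Notation S := (subT E u).

Lemma inS v : (v \in S) = (P v \subset P u).
Proof. by rewrite inE. Qed.

Lemma S_closed w x : connect e w x -> x \in S -> w \in S.
Proof. by move=> h; rewrite !inS; apply: subset_trans (P_trans h). Qed.

Lemma uS : u \in S.
Proof. by rewrite inS. Qed.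

Lemma in_nbS x : x \in S -> in_nb S E x = in_nb setT E x.
Proof.
move=> hx; apply/setP => w; rewrite [_ \in in_nb S E x]inE [_ \in in_nb setT E x]inE /Er in_setT hx /=.
case hw: (E w x); rewrite ?andbF ?andbT //=.
rewrite in_setT; apply: S_closed hx; apply: connect1; by rewrite eE.
Qed.

Lemma plS v : (v \in players S E) = (v \in S) && (v \in pl).
Proof.
rewrite [v \in players S E]inE [v \in pl]inE in_setT /=.
case hv: (v \in S) => //=; by rewrite in_nbS.
Qed.

Lemma msS v : (v \in matches S E) = (v \in S) && (v \in ms).
Proof.
rewrite [v \in matches S E]inE [v \in ms]inE in_setT /=.
case hv: (v \in S) => //=; by rewrite in_nbS.
Qed.

Lemma PS_pl p : p \in pl -> (p \in S) = (p \in P u).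
Proof. by move=> hp; rewrite inS P_pl // sub1set. Qed.

Lemma in_nbS_E w x : w \in in_nb S E x -> [/\ w \in S, x \in S & e w x].
Proof. rewrite [w \in in_nb S E x]inE /Er => /and3P [h1 h2 h3]; split => //; by rewrite /Er !in_setT. Qed.

Definition Xs x := P x :\: P u.

Lemma Xs_ne x : x \notin S -> exists p, p \in Xs x.
Proof.
rewrite inS => /subsetPn [p h1 h2]; exists p; by rewrite /Xs in_setD h1 h2.
Qed.

Definition G x : V :=
  if [pick p in Xs x] is Some p0 then [arg max_(p > p0 in Xs x) (enum_rank p : nat)] else x.

Lemma G_spec x : x \notin S -> G x \in Xs x /\ forall q, q \in Xs x -> enum_rank q <= enum_rank (G x).
Proof.
move=> hx; rewrite /G; case: pickP => [p0 hp0|H].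
  by case: (arg_maxnP (fun p : V => (enum_rank p : nat)) hp0) => g hg hmax; split.
have [p hp] := Xs_ne hx; by move: (H p); rewrite hp.
Qed.

Lemma G_Xs x : x \notin S -> G x \in Xs x.
Proof. by case/G_spec. Qed.

Lemma G_notPu x : x \notin S -> G x \notin P u.
Proof. by move/G_Xs; rewrite /Xs in_setD => /andP []. Qed.

Lemma G_P x : x \notin S -> G x \in P x.
Proof. by move/G_Xs; rewrite /Xs in_setD => /andP []. Qed.

Lemma G_sub x w : x \notin S -> w \notin S -> P w \subset P x -> G x \in P w -> G w = G x.
Proof.
move=> hx hw hsub hg.
have [gx mx] := G_spec hx; have [gw mw] := G_spec hw.
have hgxw : G x \in Xs w by move: gx; rewrite /Xs !in_setD hg andbT => /andP [].
have hgwx : G w \in Xs x by move: gw; rewrite /Xs !in_setD => /andP [-> /(subsetP hsub) ->].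
apply: enum_rank_inj; apply/val_inj/eqP; rewrite eqn_leq.
by rewrite (mx _ hgwx) (mw _ hgxw).
Qed.

Definition Z (C : {ffun V -> V}) (oa : option V) : {ffun V -> V} :=
  [ffun x => if x \in S then C x else
     if oa is Some a then (if a \in P x then a else G x) else G x].

Definition okA (oa : option V) := forall a, oa = Some a -> a \in pl /\ a \notin P u.

Lemma Z_out C oa x : okA oa -> x \notin S -> Z C oa x \notin P u.
Proof.
move=> ho hx; rewrite ffunE (negbTE hx).
case: oa ho => [a|] ho; last exact: G_notPu.
case: ifP => _; last exact: G_notPu.
by case: (ho a erefl).
Qed.

Lemma Z_br C oa : is_bracket S E C -> okA oa -> is_bracket setT E (Z C oa).
Proof.
case=> C1 C2 C3 C4 ho; split.
- move=> v _; rewrite ffunE; case: ifP => hv.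
    by have := C1 v hv; rewrite plS => /andP [].
  case: oa ho => [a|] ho; last by apply: (P_sub_pl (G_P (negbT hv))).
  case: ifP => ha; first by case: (ho a erefl).
  exact: (P_sub_pl (G_P (negbT hv))).
- move=> p hp; rewrite ffunE; case: ifP => hv.
    by apply: C2; rewrite plS hv.
  have hG : G p = p by have := G_P (negbT hv); rewrite P_pl // in_set1 => /eqP.
  case: oa ho => [a|] ho //; case: ifP => // ha.
  by move: ha; rewrite P_pl // in_set1 => /eqP.
- move=> x hx; case hxS: (x \in S).
    have hxm : x \in matches S E by rewrite msS hxS.
    have [w hw hCw] := C3 x hxm.
    have [hwS _ ewx] := in_nbS_E hw.
    by exists w; rewrite ?in_nbE // !ffunE hxS hwS.
  have hgen : forall p, p \in P x -> p \notin P u -> exists2 w, e w x & (w \notin S) && (p \in P w).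
    move=> p hp hpu; have [w hw1 hw2] := P_in_nb hx hp.
    exists w => //; rewrite hw2 andbT; apply/negP => hwS.
    by rewrite inS in hwS; rewrite (subsetP hwS _ hw2) in hpu.
  have hGw : forall w, e w x -> w \notin S -> G x \in P w -> G w = G x.
    move=> w hw hwS hgw; apply: G_sub => //; first by rewrite hxS.
    by apply: P_trans; apply: connect1.
  rewrite ffunE hxS.
  have hxS' : x \notin S by rewrite hxS.
  case: oa ho => [a|] ho.
    case: ifP => hax.
      have [w hw /andP [hwS haw]] := hgen a hax (ho a erefl).2.
      by exists w; rewrite ?in_nbE // ffunE (negbTE hwS) haw.
    have [w hw /andP [hwS hgw]] := hgen _ (G_P hxS') (G_notPu hxS').
    exists w; rewrite ?in_nbE // ffunE (negbTE hwS).
    have -> : (a \in P w) = false.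
      apply/negbTE/negP => h; move: hax; rewrite (subsetP (P_trans (connect1 hw)) _ h) //.
    by rewrite hGw.
  have [w hw /andP [hwS hgw]] := hgen _ (G_P hxS') (G_notPu hxS').
  by exists w; rewrite ?in_nbE // ffunE (negbTE hwS) hGw.
- by move=> v; rewrite in_setT.
Qed.

Definition rs (B : {ffun V -> V}) : {ffun V -> V} := [ffun v => if v \in S then B v else v].

Lemma rs_br B : is_bracket setT E B -> is_bracket S E (rs B).
Proof.
move=> hB; have [B1 B2 B3 B4] := hB; split.
- move=> v hv; rewrite ffunE hv plS B1 ?in_setT // andbT.
  rewrite PS_pl ?B1 ?in_setT //; apply: (subsetP _ _ (br_P hB v)); by rewrite -inS.
- by move=> a; rewrite plS ffunE => /andP [-> ha]; rewrite B2.
- move=> x; rewrite msS => /andP [hxS hxm].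
  have [w hw hBw] := B3 x hxm.
  have hwS : w \in S by apply: S_closed hxS; apply: connect1; rewrite -in_nbE.
  exists w; first by rewrite in_nbS.
  by rewrite !ffunE hxS hwS.
- by move=> v hv; rewrite ffunE (negbTE hv).
Qed.

Variable R : realType.
Local Open Scope ring_scope.

Definition outs (sigma : V -> R) (Zb B : {ffun V -> V}) : R :=
  \sum_(x in ms) (if x \in S then 0 else if Zb x == B x then sigma x else 0).

Lemma score_split sigma C oa B :
  score setT E sigma (Z C oa) B = score S E sigma C (rs B) + outs sigma (Z C oa) B.
Proof.
rewrite /score (bigID (fun x => x \in S)) /=; congr (_ + _).
  apply: eq_bigl => x; rewrite msS !ffunE; case: (x \in S); by rewrite ?andbT ?andbF.
rewrite /outs big_mkcondr big_mkcondr; apply: eq_bigr => x _.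
by case: (x \in S); case: (Z C oa x == B x).
Qed.

Definition ind (sigma : V -> R) (Zb B : {ffun V -> V}) x : R :=
  if x \in S then 0 else if Zb x == B x then sigma x else 0.

Definition tt sigma (Za Zb B B' : {ffun V -> V}) x : R :=
  (ind sigma Za B x - ind sigma Za B' x) - (ind sigma Zb B x - ind sigma Zb B' x).

Lemma tt_sum sigma Za Zb B B' :
  \sum_(x in ms) tt sigma Za Zb B B' x =
  (outs sigma Za B - outs sigma Za B') - (outs sigma Zb B - outs sigma Zb B').
Proof. by rewrite /outs -!sumrB. Qed.

Definition inDs (B B' : {ffun V -> V}) y :=
  [&& y \in ms, y \notin S, B y != B' y & (B y \notin P u) || (B' y \notin P u)].
Definition Ds (B B' : {ffun V -> V}) : {set V} := [set y | inDs B B' y].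
Lemma DsE B B' y : (y \in Ds B B') = inDs B B' y.
Proof. by rewrite in_set. Qed.

Lemma DsC B B' : Ds B B' = Ds B' B.
Proof. by apply/setP => y; rewrite !DsE /inDs eq_sym orbC. Qed.

Lemma ZE C a x : x \notin S -> Z C (Some a) x = if a \in P x then a else G x.
Proof. by move=> hx; rewrite ffunE (negbTE hx). Qed.

Lemma neq_out z w : z \notin P u -> w \in P u -> (z == w) = false.
Proof. by move=> hz hw; apply/negbTE; apply: contraNneq hz => ->. Qed.

Lemma term_ge sigma B B' C a b y x :
  (forall x, x \in ms -> 0 < sigma x) ->
  is_bracket setT E B -> is_bracket setT E B' ->
  a \in pl -> a \notin P u -> b \in pl -> b \notin P u -> b != a ->
  (forall x, x \in ms -> a \in P x -> b \in P x) ->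
  y \in Ds B B' -> (forall y', y' \in Ds B B' -> (anc y <= anc y')%N) -> B y = a ->
  x \in ms ->
  0 <= tt sigma (Z C (Some a)) (Z C (Some b)) B B' x /\
  (x = y -> sigma y <= tt sigma (Z C (Some a)) (Z C (Some b)) B B' x).
Proof.
move=> hs hB hB' hapl hau hbpl hbu hba hpart hy hmin hBy hxm.
have hym : y \in ms by move: hy; rewrite DsE => /and4P [].
have hyS : y \notin S by move: hy; rewrite DsE => /and4P [].
have hya : a \in P y by rewrite -hBy; apply: br_P.
have hyb : b \in P y by apply: hpart.
have hB'y : B' y != a by move: hy; rewrite DsE /inDs hBy eq_sym => /and4P [].
have hconn : forall p, p \in P x -> p \in P y -> x \in Ds B B' -> connect e y x.
  move=> p hpx hpy hxD; case/orP: (P_cmp hpy hpx) => // hxy.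
  case: (eqVneq x y) => [->|hne]; first exact: connect0.
  have := anc_lt hxy hne; by rewrite ltnNge hmin.
have hsy := hs y hym.
case hxS: (x \in S).
  rewrite /tt /ind hxS !subrr; split => // hxy; by rewrite -hxy hxS in hyS.
have hxS' : x \notin S by rewrite hxS.
rewrite /tt /ind hxS !ZE //.
case hab: ((a \in P x) || (b \in P x)); last first.
  move/negbT: (hab); rewrite negb_or => /andP [/negbTE -> /negbTE ->].
  rewrite subrr; split => // hxy; by move: hab; rewrite hxy hya.
case hxD: (x \in Ds B B').
  have hyx : connect e y x.
    by case/orP: hab => [h|h]; [apply: (hconn a) | apply: (hconn b)].
  have hax : a \in P x by apply: (subsetP (P_trans hyx)).
  have hbx : b \in P x by apply: (subsetP (P_trans hyx)).
  rewrite hax hbx.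
  have h1 : (a == B' x) = false.
    apply/negbTE/negP => /eqP hx.
    have e1 : B' y = B' x by apply: br_down hB' hyx _; rewrite -hx.
    by move: hB'y; rewrite e1 hx eqxx.
  have h2 : (b == B x) = false.
    apply/negbTE/negP => /eqP hx.
    have e2 : B y = B x by apply: br_down hB hyx _; rewrite -hx.
    by move: hba; rewrite hx -e2 hBy eqxx.
  rewrite h1 h2.
  have hsx := hs x hxm.
  split.
    by case: (a == B x); case: (b == B' x); lra.
  move=> hxy; subst x; rewrite hBy eqxx.
  by case: (b == B' y); lra.
move: hxD; rewrite DsE /inDs hxm hxS' /= => hxD.
case: (eqVneq (B x) (B' x)) => [hBB|hBB].
  rewrite hBB !subrr; split => // hxy; by move: hy; rewrite -hxy DsE /inDs hBB eqxx !andbF.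
move: hxD; rewrite hBB /= => /norP [/negPn hBu /negPn hB'u].
have hza : (if a \in P x then a else G x) \notin P u by case: ifP => _; rewrite ?G_notPu.
have hzb : (if b \in P x then b else G x) \notin P u by case: ifP => _; rewrite ?G_notPu.
rewrite !neq_out // subrr; split => // hxy; move: hy; by rewrite -hxy DsE /inDs hBu hB'u => /and4P [].
Qed.

Lemma key sigma B B' C a b y :
  (forall x, x \in ms -> 0 < sigma x) ->
  is_bracket setT E B -> is_bracket setT E B' ->
  a \in pl -> a \notin P u -> b \in pl -> b \notin P u -> b != a ->
  (forall x, x \in ms -> a \in P x -> b \in P x) ->
  y \in Ds B B' -> (forall y', y' \in Ds B B' -> (anc y <= anc y')%N) -> B y = a ->
  outs sigma (Z C (Some a)) B - outs sigma (Z C (Some a)) B' =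
  outs sigma (Z C (Some b)) B - outs sigma (Z C (Some b)) B' -> False.
Proof.
move=> hs hB hB' hapl hau hbpl hbu hba hpart hy hmin hBy heq.
have hym : y \in ms by move: hy; rewrite DsE => /and4P [].
have : 0 < \sum_(x in ms) tt sigma (Z C (Some a)) (Z C (Some b)) B B' x.
  rewrite (bigD1 y) //=.
  have [_ h1] := term_ge C hs hB hB' hapl hau hbpl hbu hba hpart hy hmin hBy hym.
  have h1' := h1 erefl.
  have h2 : 0 <= \sum_(x in ms | x != y) tt sigma (Z C (Some a)) (Z C (Some b)) B B' x.
    apply: sumr_ge0 => x /andP [hx _].
    by case: (term_ge C hs hB hB' hapl hau hbpl hbu hba hpart hy hmin hBy hx).
  have := hs y hym; lra.
rewrite tt_sum; lra.
Qed.

Definition Hpair sigma (B B' : {ffun V -> V}) :=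
  forall a, a \in pl -> a \notin P u -> exists b, exists C,
    [/\ b \in pl, b \notin P u, b != a, (forall x, x \in ms -> a \in P x -> b \in P x) &
     outs sigma (Z C (Some a)) B - outs sigma (Z C (Some a)) B' =
     outs sigma (Z C (Some b)) B - outs sigma (Z C (Some b)) B'].

Lemma claim sigma B B' :
  (forall x, x \in ms -> 0 < sigma x) ->
  is_bracket setT E B -> is_bracket setT E B' -> Hpair sigma B B' -> Ds B B' = set0.
Proof.
move=> hs hB hB' hp.
apply/eqP/negPn/negP => /set0Pn [y0 hy0].
case: (arg_minnP anc hy0) => y hy hmin.
have hy1 : y \in Ds B B' by [].
have hmin1 : forall y', y' \in Ds B B' -> (anc y <= anc y')%N by [].
clear hy hmin; rename hy1 into hy; rename hmin1 into hmin.
have hy' : inDs B B' y by rewrite -DsE.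
case/and4P: hy' => hym hyS hneq /orP [hBu|hB'u].
  have [b [C [hbpl hbu hba hpart heq]]] := hp (B y) (P_sub_pl (br_P hB y)) hBu.
  exact: (key hs hB hB' (P_sub_pl (br_P hB y)) hBu hbpl hbu hba hpart hy hmin erefl heq).
have [b [C [hbpl hbu hba hpart heq]]] := hp (B' y) (P_sub_pl (br_P hB' y)) hB'u.
rewrite DsC in hy.
apply: (key hs hB' hB (P_sub_pl (br_P hB' y)) hB'u hbpl hbu hba hpart hy _ erefl).
  by move=> y' hy'; apply: hmin; rewrite DsC.
lra.
Qed.

Lemma notDs B B' x : Ds B B' = set0 -> x \in ms -> x \notin S -> B x != B' x ->
  (B x \in P u) && (B' x \in P u).
Proof.
move=> h0 hxm hxS hne; have : x \notin Ds B B' by rewrite h0 inE.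
by rewrite DsE /inDs hxm hxS hne /= negb_or !negbK.
Qed.

Lemma outs_eq sigma C oa B B' : Ds B B' = set0 -> okA oa ->
  outs sigma (Z C oa) B = outs sigma (Z C oa) B'.
Proof.
move=> h0 ho; apply: eq_bigr => x hxm; case hxS: (x \in S) => //.
case: (eqVneq (B x) (B' x)) => [->//|hne].
have /andP [h1 h2] := notDs h0 hxm (negbT hxS) hne.
have hz := Z_out C ho (negbT hxS).
by rewrite !neq_out.
Qed.

Lemma final_eq B B' : is_bracket setT E B -> is_bracket setT E B' ->
  Ds B B' = set0 -> rs B = rs B' -> B = B'.
Proof.
move=> hB hB' h0 hrs; apply/ffunP => v.
have hu : B u = B' u by have := congr1 (fun f : {ffun V -> V} => f u) hrs; rewrite !ffunE uS.
case hvS: (v \in S).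
  by have := congr1 (fun f : {ffun V -> V} => f v) hrs; rewrite !ffunE hvS.
case hvp: (v \in pl).
  by case: hB => _ H2 _ _; case: hB' => _ H2' _ _; rewrite H2 ?H2'.
have hvm : v \in ms by rewrite ms_pl hvp.
case: (eqVneq (B v) (B' v)) => // hne.
have /andP [h1 h2] := notDs h0 hvm (negbT hvS) hne.
have huv : forall p, p \in P u -> p \in P v -> connect e u v.
  move=> p hpu hpv; case/orP: (P_cmp hpu hpv) => // hvu.
  by move: hvS; rewrite (S_closed hvu uS).
have e1 : B u = B v by apply: br_down hB (huv _ h1 (br_P hB v)) h1.
have e2 : B' u = B' v by apply: br_down hB' (huv _ h2 (br_P hB' v)) h2.
by rewrite -e1 -e2.
Qed.

Definition fA (A : {set {set V}}) (Bu : {set {ffun V -> V}}) (A0 : {set V}) : {ffun V -> V} :=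
  nth [ffun v => v] (enum Bu) (index A0 (enum A) %% #|Bu|).

Lemma fA_in A Bu A0 : Bu != set0 -> fA A Bu A0 \in Bu.
Proof.
move=> hne; rewrite -mem_enum; apply: mem_nth; rewrite -cardE ltn_pmod // card_gt0 //.
Qed.

Lemma fA_card A Bu : Bu != set0 -> (#|Bu| - #|fA A Bu @: A| = #|Bu| - #|A|)%N.
Proof.
move=> hne; case: (leqP #|A| #|Bu|) => hAB.
  rewrite card_in_imset // => A0 A1 h0 h1; rewrite /fA => heq.
  have i0 : (index A0 (enum A) < #|A|)%N by rewrite cardE index_mem mem_enum.
  have i1 : (index A1 (enum A) < #|A|)%N by rewrite cardE index_mem mem_enum.
  have s0 : (index A0 (enum A) < #|Bu|)%N by apply: leq_trans i0 hAB.
  have s1 : (index A1 (enum A) < #|Bu|)%N by apply: leq_trans i1 hAB.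
  rewrite !modn_small // in heq.
  move/eqP: heq; rewrite nth_uniq ?enum_uniq -?cardE // => /eqP hi.
  by rewrite -(nth_index set0 (_ : A0 \in enum A)) ?mem_enum // hi nth_index ?mem_enum.
have -> : fA A Bu @: A = Bu.
  apply/eqP; rewrite eqEsubset; apply/andP; split.
    by apply/subsetP => C /imsetP [A0 _ ->]; apply: fA_in.
  apply/subsetP => C hC.
  have hi : (index C (enum Bu) < #|Bu|)%N by rewrite cardE index_mem mem_enum.
  have hiA : (index C (enum Bu) < #|A|)%N by exact: ltn_trans hi hAB.
  apply/imsetP; exists (nth set0 (enum A) (index C (enum Bu))).
    by rewrite -mem_enum mem_nth // -cardE.
  rewrite /fA index_uniq ?enum_uniq -?cardE //.
  by rewrite modn_small // nth_index // mem_enum.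
by rewrite subnn; apply/esym/eqP; rewrite subn_eq0 ltnW.
Qed.

Lemma in_cover (A : {set {set V}}) A0 x : A0 \in A -> x \in A0 -> x \in cover A.
Proof. by move=> h1 h2; apply/bigcupP; exists A0. Qed.

Lemma main_sec (Bu : {set {ffun V -> V}}) :
    (forall B, B \in Bu -> is_bracket S E B) ->
    Bu != set0 ->
  forall (A : {set {set V}}),
    partition A (pl :\: P u) ->
    (forall a A0, a \in pl :\: P u -> A0 \in A -> a \in A0 ->
       exists2 b, b \in A0 :\ a &
         forall x, x \in ms -> a \in P x -> b \in P x) ->
  exists Bs : {set {ffun V -> V}},
    [/\ (forall B, B \in Bs -> is_bracket setT E B),
        #|Bs| = (#|pl :\: P u| + (#|Bu| - #|A|))%N &
        forall sigma : V -> R,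
          (forall x, x \in ms -> (0 < sigma x)%R) ->
          resolving S E sigma Bu -> resolving setT E sigma Bs].
Proof.
move=> hBu hne A hpart hpr.
set D := pl :\: P u.
set f := fA A Bu.
set S1 := [set Z (f (pblock A a)) (Some a) | a in D].
set S2 := [set Z C None | C in Bu :\: f @: A].
exists (S1 :|: S2).
case/and3P: hpart => /eqP hcov htriv h0.
change (cover A = D) in hcov.
have hDok : forall a, a \in D -> okA (Some a).
  by move=> a; rewrite in_setD => /andP [h1 h2] a' [<-].
have hNok : okA None by [].
have hblk : forall a, a \in D -> pblock A a \in A.
  by move=> a ha; apply: pblock_mem; rewrite hcov.
have hfin : forall A0, f A0 \in Bu by move=> A0; apply: fA_in.
have hZinj : forall C C' oa oa', C \in Bu -> C' \in Bu -> Z C oa = Z C' oa' -> C = C'.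
  move=> C C' oa oa' hC hC' heq; apply/ffunP => v.
  case hv: (v \in S).
    by have := congr1 (fun g : {ffun V -> V} => g v) heq; rewrite !ffunE hv.
  case: (hBu C hC) => _ _ _ ->; last by rewrite hv.
  by case: (hBu C' hC') => _ _ _ ->; rewrite ?hv.
have [r hr] := root_ex.
have hZroot : forall a C, a \in D -> Z C (Some a) r = a.
  move=> a C ha.
  have har : a \in P r by rewrite inE hr andbT; move: ha; rewrite in_setD => /andP [].
  have hrS : r \notin S.
    apply/negP => hrS; move: ha; rewrite in_setD => /andP [/negP hau _]; apply: hau.
    by move: hrS; rewrite inS => /subsetP; apply.
  by rewrite ZE // har.
split.
- move=> B; rewrite in_setU => /orP [/imsetP [a ha ->]|/imsetP [C hC ->]].
    by apply: Z_br; [apply: hBu; apply: hfin | apply: hDok].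
  by apply: Z_br => //; apply: hBu; move: hC; rewrite in_setD => /andP [].
- have hdis : S1 :&: S2 = set0.
    apply/setP => Z0; rewrite inE in_set0; apply/negP.
    move=> /andP [/imsetP [a ha ->] /imsetP [C hC heq]].
    move: hC; rewrite in_setD => /andP [hCf hC].
    have := hZinj _ _ _ _ (hfin _) hC heq => hfc.
    by move: hCf; rewrite -hfc imset_f // hblk.
  rewrite cardsU hdis cards0 subn0.
  rewrite card_in_imset; last first.
    move=> a a' ha ha' heq.
    have := congr1 (fun g : {ffun V -> V} => g r) heq.
    by rewrite !hZroot.
  rewrite card_in_imset; last first.
    move=> C C' hC hC' heq; apply: (hZinj _ _ _ _ _ _ heq).
      by move: hC; rewrite in_setD => /andP [].
    by move: hC'; rewrite in_setD => /andP [].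
  congr (_ + _)%N.
  have hsub : f @: A \subset Bu by apply/subsetP => C /imsetP [A0 _ ->].
  by rewrite cardsD (setIidPr hsub); apply: fA_card.
- move=> sigma hs hres B B' hB hB' hneq.
  case: (boolP [exists Bi in S1 :|: S2, score setT E sigma Bi B != score setT E sigma Bi B']).
    by move=> /existsP [Bi /andP [h1 h2]]; exists Bi.
  move=> hall.
  have heqs : forall Bi, Bi \in S1 :|: S2 -> score setT E sigma Bi B = score setT E sigma Bi B'.
    move=> Bi hBi; apply/eqP; move: hall => /existsPn /(_ Bi).
    by rewrite hBi /= negbK.
  have hpairs : Hpair sigma B B'.
    move=> a hapl hau.
    have haD : a \in D by rewrite in_setD hapl hau.
    have haA0 : a \in pblock A a by rewrite mem_pblock hcov.
    have [b hb hbx] := hpr a (pblock A a) haD (hblk a haD) haA0.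
    move: hb; rewrite in_setD1 => /andP [hba hbA0].
    have hbD : b \in D by rewrite -hcov; apply: in_cover hbA0; apply: hblk.
    have hpb : pblock A b = pblock A a by apply: def_pblock => //; apply: hblk.
    exists b, (f (pblock A a)).
    have hbok := hDok b hbD.
    have [hbpl hbu] := hbok b erefl.
    split => //.
    have hmA : Z (f (pblock A a)) (Some a) \in S1 :|: S2.
      by rewrite in_setU; apply/orP; left; apply/imsetP; exists a.
    have hmB : Z (f (pblock A a)) (Some b) \in S1 :|: S2.
      by rewrite in_setU; apply/orP; left; apply/imsetP; exists b; rewrite ?hpb.
    have e1 := heqs _ hmA; have e2 := heqs _ hmB.
    rewrite !score_split in e1 e2.
    lra.
  have hD0 := claim hs hB hB' hpairs.
  have hrs : rs B = rs B'.
    case: (eqVneq (rs B) (rs B')) => // hne'.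
    have [C hC hsc] := hres _ _ (rs_br hB) (rs_br hB') hne'.
    have [oa [hoa hBi]] : exists oa, okA oa /\ Z C oa \in S1 :|: S2.
      case: (boolP (C \in f @: A)) => hCf.
        case/imsetP: hCf => A0 hA0 ->.
        have : A0 != set0 by apply: contraNneq h0 => <-.
        case/set0Pn => a haA0.
        have haD : a \in D by rewrite -hcov; apply: in_cover haA0.
        have hpa : pblock A a = A0 by apply: def_pblock.
        exists (Some a); split; first exact: hDok.
        by rewrite in_setU; apply/orP; left; apply/imsetP; exists a; rewrite ?hpa.
      exists None; split => //.
      by rewrite in_setU; apply/orP; right; apply: imset_f; rewrite in_setD hCf hC.
    have := heqs _ hBi; rewrite !score_split (@outs_eq sigma C oa B B' hD0 hoa) => /addIr hh.
    by move: hsc; rewrite hh eqxx.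
  by move: hneq; rewrite (final_eq hB hB' hD0 hrs) eqxx.
Qed.

End Tree.

Theorem proposition5p11 (R : realType) (V : finType) (E : rel V) :
  is_SET setT E ->
  forall (u : V) (Bu : {set {ffun V -> V}}),
    (forall B, B \in Bu -> is_bracket (subT E u) E B) ->
    Bu != set0 ->
  forall (A : {set {set V}}),
    partition A (players setT E :\: Pof setT E u) ->
    (forall a A0, a \in players setT E :\: Pof setT E u -> A0 \in A -> a \in A0 ->
       exists2 b, b \in A0 :\ a &
         forall x, x \in matches setT E -> a \in Pof setT E x -> b \in Pof setT E x) ->
  exists Bs : {set {ffun V -> V}},
    [/\ (forall B, B \in Bs -> is_bracket setT E B),
        #|Bs| = (#|players setT E :\: Pof setT E u| + (#|Bu| - #|A|))%N &
        forall sigma : V -> R,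
          (forall x, x \in matches setT E -> (0 < sigma x)%R) ->
          resolving (subT E u) E sigma Bu -> resolving setT E sigma Bs].
Proof.
move=> HT u Bu hBu hne A hpart hpr.
exact: (@main_sec V E HT u R Bu hBu hne A hpart hpr).
Qed.
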